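(* Let $n,m,v\ge1$, let $\Omega$ be a simple witness for a memory system $S(n,m,v)$, let $\lambda$ be a permutation of $\mathbb{N}_n$, and let $\tau,\tau'$ be unambiguous traces of $S(n,m,v)$ with $\tau'=\lambda^p(\tau)$. Then for all $1\le x,y\le|\tau|$ and all $1\le i\le m$: $\langle x,y\rangle\in\Omega^e(\tau,i)$ if and only if $\langle x,y\rangle\in\Omega^e(\tau',i)$.
   Context: $\mathbb{N}_n=\{1,\dots,n\}$, $\mathbb{W}_v=\{0,\dots,v\}$. Memory events $E(n,m,v)=\{R,W\}\times\mathbb{N}_n\times\mathbb{N}_m\times\mathbb{W}_v$; for $e=\langle a,b,c,d\rangle$, $op(e)=a$, $proc(e)=b$, $loc(e)=c$, $data(e)=d$; $0$ models the initial value of every location. A memory system $S(n,m,v)$ is a regular set of finite runs over an alphabet containing $E(n,m,v)$ (other letters being internal events); a trace is the subsequence of memory events of a run. For a sequence $\tau$ of memory events: $L(\tau,j)=\{k: loc(\tau(k))=j\}$, $L^w(\tau,j)=\{k\in L(\tau,j): op(\tau(k))=W\}$. A trace $\tau$ is unambiguous if for every location $j$ and $x\in L^w(\tau,j)$, $data(\tau(x))\ne0$ and $data(\tau(x))\ne data(\tau(y))$ for all $y\in L^w(\tau,j)\setminus\{x\}$. A witness $\Omega$ assigns to each trace $\tau$ and location $j$ a strict total order $\Omega(\tau,j)$ on $L^w(\tau,j)$; it is simple if $\langle x,y\rangle\in\Omega(\tau,j)$ iff $x<y$, for all $x,y\in L^w(\tau,j)$. For unambiguous $\tau$, $\Omega^e(\tau,j)\subseteq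 L(\tau,j)^2$: $\langle x,y\rangle\in\Omega^e(\tau,j)$ iff (1) $data(\tau(x))=data(\tau(y))$, $op(\tau(x))=W$, $op(\tau(y))=R$; or (2) $data(\tau(x))=0$ and $data(\tau(y))\ne0$; or (3) there are $a,b\in L^w(\tau,j)$ with $\langle a,b\rangle\in\Omega(\tau,j)$, $data(\tau(a))=data(\tau(x))$, $data(\tau(b))=data(\tau(y))$. For a permutation $\lambda$ of $\mathbb{N}_n$, $\lambda^p(\langle a,b,c,d\rangle)=\langle a,\lambda(b),c,d\rangle$, extended letterwise to sequences. *)

(* Defs.v *)
From mathcomp Require Import all_boot.
Set Implicit Arguments. Unset Strict Implicit. Unset Printing Implicit Defensive.

Inductive op_t := Rd | Wr.

Record mevent := MEv { op : op_t; proc : nat; loc : nat; data : nat }.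

Definition is_event (n m v : nat) (e : mevent) : Prop :=
  [/\ 1 <= proc e <= n, 1 <= loc e <= m & data e <= v].

(* Runs are finite words over E(n,m,v) + internal events I. *)
Definition letter (I : Type) := (mevent + I)%type.

Definition regular (A : Type) (L : seq A -> Prop) : Prop :=
  exists (Q : finType) (q0 : Q) (d : Q -> A -> Q) (F : pred Q),
    forall w, L w <-> F (foldl d q0 w).

(* Memory system S(n,m,v): a regular set of finite runs over the finite
   alphabet E(n,m,v) + I. *)
Definition memory_system (n m v : nat) (I : finType)
    (S : seq (letter I) -> Prop) : Prop :=
  regular S /\
  (forall r, S r -> forall k, k < size r ->
     match nth (inr (0 : nat)) (map (fun a => match a with
                 inl e => inl e | inr _ => inr 0 end) r) k with
     | inl e => is_event n m v e | inr _ => True end).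

Definition trace_of (I : Type) (r : seq (letter I)) : seq mevent :=
  pmap (fun a => match a with inl e => Some e | inr _ => None end) r.

Definition is_trace (I : Type) (S : seq (letter I) -> Prop) (t : seq mevent) :=
  exists r, S r /\ trace_of r = t.

(* 1-based access tau(k). *)
Definition ev_at (t : seq mevent) (k : nat) : mevent := nth (MEv Rd 0 0 0) t k.-1.

Definition inL (t : seq mevent) (j k : nat) : Prop :=
  1 <= k <= size t /\ loc (ev_at t k) = j.

Definition inLw (t : seq mevent) (j k : nat) : Prop :=
  inL t j k /\ op (ev_at t k) = Wr.

Definition unambiguous (t : seq mevent) : Prop :=
  forall j x, inLw t j x ->
    data (ev_at t x) <> 0 /\
    (forall y, inLw t j y -> y <> x -> data (ev_at t x) <> data (ev_at t y)).

(* A witness: Omega tau j is a relation on positions. *)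
Definition witness_rel := seq mevent -> nat -> nat -> nat -> Prop.

Definition witness (m : nat) (I : Type) (S : seq (letter I) -> Prop)
    (Om : witness_rel) : Prop :=
  forall t j, is_trace S t -> 1 <= j <= m ->
    [/\ (forall x y, Om t j x y -> inLw t j x /\ inLw t j y),
        (forall x, ~ Om t j x x),
        (forall x y z, Om t j x y -> Om t j y z -> Om t j x z) &
        (forall x y, inLw t j x -> inLw t j y -> x <> y ->
           Om t j x y \/ Om t j y x)].

Definition simple_witness (m : nat) (I : Type) (S : seq (letter I) -> Prop)
    (Om : witness_rel) : Prop :=
  witness m S Om /\
  forall t j x y, is_trace S t -> 1 <= j <= m ->
    inLw t j x -> inLw t j y -> (Om t j x y <-> x < y).

Definition Omega_e (Om : witness_rel) (t : seq mevent) (j x y : nat) : Prop :=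
  inL t j x /\ inL t j y /\
  [\/ (data (ev_at t x) = data (ev_at t y) /\
       op (ev_at t x) = Wr /\ op (ev_at t y) = Rd),
      (data (ev_at t x) = 0 /\ data (ev_at t y) <> 0) |
      (exists a b, inLw t j a /\ inLw t j b /\ Om t j a b /\
         data (ev_at t a) = data (ev_at t x) /\
         data (ev_at t b) = data (ev_at t y))].

Definition perm_of (n : nat) (lam : nat -> nat) : Prop :=
  (forall i, 1 <= i <= n -> 1 <= lam i <= n) /\
  (forall i k, 1 <= i <= n -> 1 <= k <= n -> lam i = lam k -> i = k).

Definition lam_p (lam : nat -> nat) (e : mevent) : mevent :=
  MEv (op e) (lam (proc e)) (loc e) (data e).

(* Main.v *)
Require Import Defs.
From mathcomp Require Import all_boot.

Lemma nth_fields (lam : nat -> nat) (t : seq mevent) k :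
  let e := nth (MEv Rd 0 0 0) (map (lam_p lam) t) k in
  let e0 := nth (MEv Rd 0 0 0) t k in
  [/\ op e = op e0, loc e = loc e0 & data e = data e0].
Proof. by elim: t k => [|a t IH] [|k] //=. Qed.

Theorem lemma7p2 (n m v : nat) (I : finType) (S : seq (letter I) -> Prop)
    (Om : witness_rel) (lam : nat -> nat) (t t' : seq mevent) :
  1 <= n -> 1 <= m -> 1 <= v ->
  memory_system n m v S ->
  simple_witness m S Om ->
  perm_of n lam ->
  is_trace S t -> is_trace S t' ->
  unambiguous t -> unambiguous t' ->
  t' = map (lam_p lam) t ->
  forall x y i, 1 <= x <= size t -> 1 <= y <= size t -> 1 <= i <= m ->
    (Omega_e Om t i x y <-> Omega_e Om t' i x y).
Proof.
move=> _ _ _ _ [_ Hsw] _ Ht Ht' _ _ Et x y i _ _ Hi.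
have F k : [/\ op (ev_at t' k) = op (ev_at t k), loc (ev_at t' k) = loc (ev_at t k)
   & data (ev_at t' k) = data (ev_at t k)].
  rewrite /ev_at Et; exact: nth_fields.
have Sz : size t' = size t by rewrite Et size_map.
have EL k : inL t' i k <-> inL t i k.
  by rewrite /inL Sz; case: (F k) => _ -> _.
have ELw k : inLw t' i k <-> inLw t i k.
  rewrite /inLw; case: (F k) => -> _ _; split; case=> H1 H2; split=> //; by apply/EL.
have EOm a b : inLw t i a -> inLw t i b -> (Om t' i a b <-> Om t i a b).
  move=> Ha Hb.
  have Ha' : inLw t' i a by apply/ELw.
  have Hb' : inLw t' i b by apply/ELw.
  have := Hsw t' i a b Ht' Hi Ha' Hb'; have := Hsw t i a b Ht Hi Ha Hb; tauto.
rewrite /Omega_e.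
case: (F x) => -> _ ->; case: (F y) => -> _ ->.
split=> [] [Hx [Hy H]]; (split; [by apply/EL|split; [by apply/EL|]]);
  case: H => [H|H|[a [b [Ha [Hb [Hab [Da Db]]]]]]]; try by [constructor 1|constructor 2].
- constructor 3; exists a, b.
  case: (F a) => _ _ Ea; case: (F b) => _ _ Eb.
  rewrite Ea Eb.
  by split; [|split; [|split]] => //; try apply/ELw => //; apply/EOm.
- constructor 3; exists a, b.
  have Ha' : inLw t i a by apply/ELw.
  have Hb' : inLw t i b by apply/ELw.
  case: (F a) => _ _ Ea; case: (F b) => _ _ Eb.
  rewrite -Ea -Eb.
  by split; [|split; [|split]] => //; apply/EOm.
Qed.
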